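(* Greedy charger placement is not optimal in general. Consider the directed graph with vertices $O, c_0, c_1, c_2, c_3, c_4, c_5, D$ and links (with delay functions of the link's own flow $x$): $O\to c_0$: $10$; $c_0\to D$: $10$; $O\to c_4$: $x$; $c_4\to c_3$: $0$; $c_3\to D$: $1.1$; $c_4\to c_2$: $0$; $c_2\to c_5$: $0$; $c_5\to D$: $x$; $O\to c_1$: $0$; $c_1\to c_5$: $1.1$. There is a single OD pair $(O,D)$ with demand $1$, all of type $F_2$ (must charge exactly once), and charging self-loops have zero delay. A charger always exists at $c_0$; one must choose a set $S\subseteq\{c_1,c_2,c_3\}$ with $|S|=2$ of additional charger locations, the objective being the total delay $c_d=\sum_l x_l d_l(x_l)$ at Nash equilibrium of the network with chargers at $\{c_0\}\cup S$. Then: (i) with a single added charger, the equilibrium total delay is $2.1$ for $S=\{c_1\}$, $2$ for $S=\{c_2\}$, and $2.1$ for $S=\{c_3\}$; (ii) for $S=\{c_1,c_2\}$ and $S=\{c_2,c_3\}$ the equilibrium total delay is $2$; (iii) for $S=\{c_1,c_3\}$ the equilibrium total delay is $1.6$. Consequently the greedy algorithm (which adds one location at a time, each time the one minimizing the equilibrium total delay) selects $c_2$ first and ends with total delay $2$, whereas the optimal choice $\{c_1,c_3\}$ achieves $1.6$.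
   Context: Model: non-atomic congestion game on a directed graph; a charger at vertex $v$ is a self-loop $(v,v)$; an $F_2$ agent's feasible routes are directed paths (distinct vertices) from $O$ to $D$ containing exactly one charging self-loop at a vertex of the path where a charger is placed. Route cost is the sum of link delays evaluated at the link flows. A Nash (Wardrop) equilibrium is a feasible route-flow assignment in which every route carrying positive flow has minimal cost among feasible routes. Total delay is $c_d=\sum_{l} x_l\,d_l(x_l)$ summed over all links (including charger self-loops, which here contribute zero). *)

(* Defs.v *)
From HB Require Import structures.
From mathcomp Require Import all_boot all_order all_algebra.
Set Implicit Arguments. Unset Strict Implicit. Unset Printing Implicit Defensive.
Import Order.TTheory GRing.Theory Num.Theory.
Local Open Scope ring_scope.

Section Model.
Variables (R : realFieldType) (V : finType).
(* E u v      : there is a link u -> v (at most one link per ordered pair)  *)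
(* dc c x     : delay of the charging self-loop (c,c) at flow x             *)
Variables (E : rel V) (dl : V -> V -> R -> R) (dc : V -> R -> R)
          (ch : {set V}) (o d : V) (dem : R).

Fixpoint seqs_upto (k : nat) : seq (seq V) :=
  if k is k'.+1 then [::] :: [seq x :: s | x <- enum V, s <- seqs_upto k']
  else [:: [::]].

Definition is_OD_path (p : seq V) : bool :=
  if p is x :: s then [&& x == o, path E x s, last x s == d & uniq p]
  else false.

(* an F2 route: a simple o-d path together with the (unique) vertex of the
   path at which the charging self-loop is taken; a charger must be there *)
Definition F2route := (seq V * V)%type.

Definition feasibleF2 (r : F2route) : bool :=
  [&& is_OD_path r.1, r.2 \in r.1 & r.2 \in ch].

Definition routes : seq F2route :=
  [seq r <- [seq (p, c) | p <- undup (seqs_upto #|V|), c <- enum V]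
   | feasibleF2 r].

Definition links_of (p : seq V) : seq (V * V) := zip p (behead p).

Definition lflow (f : F2route -> R) (u v : V) : R :=
  \sum_(r <- routes | (u, v) \in links_of r.1) f r.
Definition cflow (f : F2route -> R) (c : V) : R :=
  \sum_(r <- routes | r.2 == c) f r.

Definition route_cost (f : F2route -> R) (r : F2route) : R :=
  \sum_(e <- links_of r.1) dl e.1 e.2 (lflow f e.1 e.2)
  + dc r.2 (cflow f r.2).

Definition total_delay (f : F2route -> R) : R :=
  \sum_(u : V) \sum_(v : V | E u v) lflow f u v * dl u v (lflow f u v)
  + \sum_(c in ch) cflow f c * dc c (cflow f c).

Definition feasible_flow (f : F2route -> R) : Prop :=
  (forall r, r \in routes -> 0 <= f r) /\ \sum_(r <- routes) f r = dem.

Definition nash (f : F2route -> R) : Prop :=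
  feasible_flow f /\
  forall r r', r \in routes -> r' \in routes -> 0 < f r ->
    route_cost f r <= route_cost f r'.

End Model.

Inductive vert := vO | c0 | c1 | c2 | c3 | c4 | c5 | vD.

Definition vert2o (v : vert) : 'I_8 :=
  match v with
  | vO => inord 0 | c0 => inord 1 | c1 => inord 2 | c2 => inord 3
  | c3 => inord 4 | c4 => inord 5 | c5 => inord 6 | vD => inord 7 end.
Definition o2vert (i : 'I_8) : option vert :=
  match val i with
  | 0 => Some vO | 1 => Some c0 | 2 => Some c1 | 3 => Some c2
  | 4 => Some c3 | 5 => Some c4 | 6 => Some c5 | 7 => Some vD | _ => None end.
Lemma vert2oK : pcancel vert2o o2vert.
Proof. by case; rewrite /o2vert /= inordK. Qed.
HB.instance Definition _ := Finite.copy vert (pcan_type vert2oK).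

Definition exE : rel vert := fun u v =>
  match u, v with
  | vO, c0 | c0, vD | vO, c4 | c4, c3 | c3, vD | c4, c2 | c2, c5 | c5, vD
  | vO, c1 | c1, c5 => true
  | _, _ => false end.

Definition exdl (R : realFieldType) (u v : vert) (x : R) : R :=
  match u, v with
  | vO, c0 => 10%:R
  | c0, vD => 10%:R
  | vO, c4 => x
  | c4, c3 => 0
  | c3, vD => 11%:R / 10%:R
  | c4, c2 => 0
  | c2, c5 => 0
  | c5, vD => x
  | vO, c1 => 0
  | c1, c5 => 11%:R / 10%:R
  | _, _ => 0 end.

Definition exdc (R : realFieldType) (c : vert) (x : R) : R := 0.

(* "the total delay at Nash equilibrium with chargers at {c0} ∪ S is val":
   an equilibrium exists, and every equilibrium has total delay val.
   Single OD pair (O,D), demand 1, all of type F2. *)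
Definition eq_total_delay (R : realFieldType) (S : {set vert}) (val : R) : Prop :=
  let ch := c0 |: S in
  (exists f, nash exE (@exdl R) (@exdc R) ch vO vD 1 f) /\
  forall f, nash exE (@exdl R) (@exdc R) ch vO vD 1 f ->
    total_delay exE (@exdl R) (@exdc R) ch vO vD f = val.

(* Main.v *)
Set Warnings "-all".
Require Import Defs.
From HB Require Import structures.
From mathcomp Require Import all_boot all_order all_algebra.
From mathcomp Require Import ring lra.
Import Order.TTheory GRing.Theory Num.Theory.
Local Open Scope ring_scope.
Section Gen.
Variables (V : finType) (E : rel V) (ch : {set V}) (o d : V).

Lemma seqs_upto_mem k (s : seq V) : (size s <= k)%N -> s \in seqs_upto V k.
elim: k s => [|k IH] [|x s] //=; rewrite ?inE ?eqxx //.



move=> Hs; apply/orP; right.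
apply: (allpairs_f (fun x s => x :: s)); [by rewrite mem_enum | exact: IH].
Qed.

Lemma mem_routes r : (r \in routes E ch o d) = feasibleF2 E ch o d r.
Proof.
rewrite /routes mem_filter; case H: feasibleF2 => //=.
case: r H => p c H.
apply: (allpairs_f (fun p c => (p, c))); last by rewrite mem_enum.
rewrite mem_undup; apply: seqs_upto_mem.
case/and3P: H => /= Hp _ _.
have Hu : uniq p by case: p Hp => // x s /and4P [].
by rewrite -(card_uniqP Hu) max_card.
Qed.

Lemma uniq_routes : uniq (routes E ch o d).
Proof.
rewrite /routes filter_uniq // allpairs_uniq ?undup_uniq ?enum_uniq //.
by move=> [a b] [a' b'] _ _ /= [-> ->].
Qed.

Lemma routes_perm (L : seq (F2route V)) : uniq L ->
  (forall r, feasibleF2 E ch o d r = (r \in L)) -> perm_eq (routes E ch o d) L.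
Proof.
move=> uL HL; apply: uniq_perm => //; first exact: uniq_routes.
by move=> r; rewrite mem_routes HL.
Qed.
End Gen.

Definition vcode (v : vert) : nat :=
  match v with vO => 0 | c0 => 1 | c1 => 2 | c2 => 3 | c3 => 4 | c4 => 5 | c5 => 6 | vD => 7 end.
Lemma vertE (x y : vert) : (x == y) = Nat.eqb (vcode x) (vcode y).
Proof.
have -> : (x == y) = (vert2o x == vert2o y) by [].
by case: x; case: y; rewrite /= -val_eqE /= !inordK.
Qed.
Ltac vsimp := repeat (rewrite ?inE /= ?eqseq_cons ?xpair_eqE ?vertE /=).

Notation P1 := [:: vO; c0; vD].
Notation P2 := [:: vO; c4; c3; vD].
Notation P3 := [:: vO; c4; c2; c5; vD].
Notation P4 := [:: vO; c1; c5; vD].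

Lemma odpath p : is_OD_path exE vO vD p -> p \in [:: P1; P2; P3; P4].
Proof.
case: p => [|x s] //= /and4P [/eqP -> Hp Hl _]; move: Hp Hl.
do 6 try (case: s => [|y s] /=; [by vsimp; try case | case: y => /=; try by case]).
Qed.

Ltac feas_tac :=
  match goal with |- context [feasibleF2 _ _ _ _ ?r] => case: r end;
  let p := fresh "p" in let c := fresh "c" in
  move=> p c; apply/idP/idP;
  [ case/and3P => /= /odpath; rewrite !inE => /or4P [] /eqP ->;
    case: c; vsimp; try (by move=> _ _); try (by move=> _ []); try (by move=> [])
  | rewrite /feasibleF2 /is_OD_path !inE;
    repeat (case/orP; [move/eqP -> ; by vsimp | ]); try (move/eqP ->; by vsimp); by [] ].


Section Flows.
Variables (R : realFieldType) (ch : {set vert}) (L : seq (F2route vert)).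
Hypothesis HL : perm_eq (routes exE ch vO vD) L.
Lemma lflowL (f : F2route vert -> R) u v :
  lflow exE ch vO vD f u v = \sum_(r <- L | (u, v) \in links_of r.1) f r.
Proof. exact: perm_big. Qed.
Lemma cflowL (f : F2route vert -> R) c :
  cflow exE ch vO vD f c = \sum_(r <- L | r.2 == c) f r.
Proof. exact: perm_big. Qed.
Lemma sumL (f : F2route vert -> R) :
  \sum_(r <- routes exE ch vO vD) f r = \sum_(r <- L) f r.
Proof. exact: perm_big. Qed.
Lemma memL r : (r \in routes exE ch vO vD) = (r \in L).
Proof. exact: perm_mem. Qed.
End Flows.
Arguments lflowL {R ch L} HL f u v.
Arguments cflowL {R ch L} HL f c.
Arguments sumL {R ch L} HL f.
Arguments memL {ch L} HL r.


Notation vlist := [:: vO; c0; c1; c2; c3; c4; c5; vD].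
Lemma sum_vert (R : realFieldType) (P : pred vert) (F : vert -> R) :
  \sum_(u : vert | P u) F u = \sum_(u <- vlist | P u) F u.
Proof.
apply: perm_big; apply: uniq_perm; first exact: index_enum_uniq.
  by vsimp.
by move=> u; rewrite mem_index_enum; case: u; vsimp.
Qed.

Lemma tdE (R : realFieldType) ch (f : F2route vert -> R) :
  total_delay exE (@exdl R) (@exdc R) ch vO vD f =
  let l := lflow exE ch vO vD f in
  l vO c0 * 10%:R + l c0 vD * 10%:R + l vO c4 * l vO c4 + l c4 c3 * 0
  + l c3 vD * (11%:R / 10%:R) + l c4 c2 * 0 + l c2 c5 * 0 + l c5 vD * l c5 vD
  + l vO c1 * 0 + l c1 c5 * (11%:R / 10%:R).
Proof.
rewrite /total_delay [X in _ + X]big1; last by move=> c _; rewrite /exdc mulr0.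
rewrite addr0 sum_vert !big_cons big_nil /=.
rewrite !sum_vert !big_cons !big_nil /=.
rewrite ?addr0 ?add0r ?addrA /=.
ring.
Qed.

Ltac lf H := rewrite /route_cost /exdc /= ?big_cons ?big_nil /= ?(lflowL H) ?big_cons ?big_nil; vsimp.
Ltac spec := repeat match goal with H : 0 < ?x -> _, H' : 0 < ?x |- _ => specialize (H H') end.

Notation L1 := [:: (P1, c0); (P4, c1)].
Lemma feas1 r : feasibleF2 exE (c0 |: [set c1]) vO vD r = (r \in L1).
Proof. feas_tac. Qed.
Lemma perm1 : perm_eq (routes exE (c0 |: [set c1]) vO vD) L1.
Proof. apply: routes_perm; [by vsimp | exact: feas1]. Qed.
Lemma case1 (R : realFieldType) : eq_total_delay [set c1] (21%:R / 10%:R : R).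
Proof.
split.
  exists (fun r => if r == (P1, c0) then 0 else if r == (P4, c1) then 1 else 0 : R).
  split; first split.
  - move=> r; rewrite (memL perm1) !inE => /orP [] /eqP ->; vsimp; lra.
  - rewrite (sumL perm1) !big_cons big_nil; vsimp; lra.
  - move=> r r'; rewrite !(memL perm1) !inE => /orP [] /eqP -> /orP [] /eqP ->;
      lf perm1; move=> ?; lra.
move=> f [[Hpos Hsum] Heq].
have K r r' : r \in L1 -> r' \in L1 -> 0 < f r ->
   route_cost exE (@exdl R) (@exdc R) (c0 |: [set c1]) vO vD f r <=
   route_cost exE (@exdl R) (@exdc R) (c0 |: [set c1]) vO vD f r'.
  by move=> Hr Hr'; apply: Heq; rewrite (memL perm1).
have Hnn r : r \in L1 -> 0 <= f r by move=> Hr; apply: Hpos; rewrite (memL perm1).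
have n0 : 0 <= f (P1, c0) by apply: Hnn; vsimp.
have n1 : 0 <= f (P4, c1) by apply: Hnn; vsimp.
have h01 := K (P1, c0) (P4, c1) ltac:(by vsimp) ltac:(by vsimp).
have h10 := K (P4, c1) (P1, c0) ltac:(by vsimp) ltac:(by vsimp).
move: Hsum h01 h10; rewrite (sumL perm1) !big_cons big_nil; lf perm1.
rewrite tdE /=; lf perm1.
move: n0 n1.
set x0 := f (P1, c0).
set x1 := f (P4, c1).
move=> n0 n1 Hs h01 h10.
have E0 : x0 = 0 by case: (ltrP 0 x0) => ?; case: (ltrP 0 x1) => ?; spec; lra.
have E1 : x1 = 1 by case: (ltrP 0 x0) => ?; case: (ltrP 0 x1) => ?; spec; lra.
by rewrite E0 E1; field.
Qed.

Notation L2 := [:: (P1, c0); (P3, c2)].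
Lemma feas2 r : feasibleF2 exE (c0 |: [set c2]) vO vD r = (r \in L2).
Proof. feas_tac. Qed.
Lemma perm2 : perm_eq (routes exE (c0 |: [set c2]) vO vD) L2.
Proof. apply: routes_perm; [by vsimp | exact: feas2]. Qed.
Lemma case2 (R : realFieldType) : eq_total_delay [set c2] (2%:R : R).
Proof.
split.
  exists (fun r => if r == (P1, c0) then 0 else if r == (P3, c2) then 1 else 0 : R).
  split; first split.
  - move=> r; rewrite (memL perm2) !inE => /orP [] /eqP ->; vsimp; lra.
  - rewrite (sumL perm2) !big_cons big_nil; vsimp; lra.
  - move=> r r'; rewrite !(memL perm2) !inE => /orP [] /eqP -> /orP [] /eqP ->;
      lf perm2; move=> ?; lra.
move=> f [[Hpos Hsum] Heq].
have K r r' : r \in L2 -> r' \in L2 -> 0 < f r ->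
   route_cost exE (@exdl R) (@exdc R) (c0 |: [set c2]) vO vD f r <=
   route_cost exE (@exdl R) (@exdc R) (c0 |: [set c2]) vO vD f r'.
  by move=> Hr Hr'; apply: Heq; rewrite (memL perm2).
have Hnn r : r \in L2 -> 0 <= f r by move=> Hr; apply: Hpos; rewrite (memL perm2).
have n0 : 0 <= f (P1, c0) by apply: Hnn; vsimp.
have n1 : 0 <= f (P3, c2) by apply: Hnn; vsimp.
have h01 := K (P1, c0) (P3, c2) ltac:(by vsimp) ltac:(by vsimp).
have h10 := K (P3, c2) (P1, c0) ltac:(by vsimp) ltac:(by vsimp).
move: Hsum h01 h10; rewrite (sumL perm2) !big_cons big_nil; lf perm2.
rewrite tdE /=; lf perm2.
move: n0 n1.
set x0 := f (P1, c0).
set x1 := f (P3, c2).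
move=> n0 n1 Hs h01 h10.
have E0 : x0 = 0 by case: (ltrP 0 x0) => ?; case: (ltrP 0 x1) => ?; spec; lra.
have E1 : x1 = 1 by case: (ltrP 0 x0) => ?; case: (ltrP 0 x1) => ?; spec; lra.
by rewrite E0 E1; field.
Qed.

Notation L3 := [:: (P1, c0); (P2, c3)].
Lemma feas3 r : feasibleF2 exE (c0 |: [set c3]) vO vD r = (r \in L3).
Proof. feas_tac. Qed.
Lemma perm3 : perm_eq (routes exE (c0 |: [set c3]) vO vD) L3.
Proof. apply: routes_perm; [by vsimp | exact: feas3]. Qed.
Lemma case3 (R : realFieldType) : eq_total_delay [set c3] (21%:R / 10%:R : R).
Proof.
split.
  exists (fun r => if r == (P1, c0) then 0 else if r == (P2, c3) then 1 else 0 : R).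
  split; first split.
  - move=> r; rewrite (memL perm3) !inE => /orP [] /eqP ->; vsimp; lra.
  - rewrite (sumL perm3) !big_cons big_nil; vsimp; lra.
  - move=> r r'; rewrite !(memL perm3) !inE => /orP [] /eqP -> /orP [] /eqP ->;
      lf perm3; move=> ?; lra.
move=> f [[Hpos Hsum] Heq].
have K r r' : r \in L3 -> r' \in L3 -> 0 < f r ->
   route_cost exE (@exdl R) (@exdc R) (c0 |: [set c3]) vO vD f r <=
   route_cost exE (@exdl R) (@exdc R) (c0 |: [set c3]) vO vD f r'.
  by move=> Hr Hr'; apply: Heq; rewrite (memL perm3).
have Hnn r : r \in L3 -> 0 <= f r by move=> Hr; apply: Hpos; rewrite (memL perm3).
have n0 : 0 <= f (P1, c0) by apply: Hnn; vsimp.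
have n1 : 0 <= f (P2, c3) by apply: Hnn; vsimp.
have h01 := K (P1, c0) (P2, c3) ltac:(by vsimp) ltac:(by vsimp).
have h10 := K (P2, c3) (P1, c0) ltac:(by vsimp) ltac:(by vsimp).
move: Hsum h01 h10; rewrite (sumL perm3) !big_cons big_nil; lf perm3.
rewrite tdE /=; lf perm3.
move: n0 n1.
set x0 := f (P1, c0).
set x1 := f (P2, c3).
move=> n0 n1 Hs h01 h10.
have E0 : x0 = 0 by case: (ltrP 0 x0) => ?; case: (ltrP 0 x1) => ?; spec; lra.
have E1 : x1 = 1 by case: (ltrP 0 x0) => ?; case: (ltrP 0 x1) => ?; spec; lra.
by rewrite E0 E1; field.
Qed.

Notation L12 := [:: (P1, c0); (P3, c2); (P4, c1)].
Lemma feas12 r : feasibleF2 exE (c0 |: [set c1; c2]) vO vD r = (r \in L12).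
Proof. feas_tac. Qed.
Lemma perm12 : perm_eq (routes exE (c0 |: [set c1; c2]) vO vD) L12.
Proof. apply: routes_perm; [by vsimp | exact: feas12]. Qed.
Lemma case12 (R : realFieldType) : eq_total_delay [set c1; c2] (2%:R : R).
Proof.
split.
  exists (fun r => if r == (P1, c0) then 0 else if r == (P3, c2) then 1 else if r == (P4, c1) then 0 else 0 : R).
  split; first split.
  - move=> r; rewrite (memL perm12) !inE => /or3P [] /eqP ->; vsimp; lra.
  - rewrite (sumL perm12) !big_cons big_nil; vsimp; lra.
  - move=> r r'; rewrite !(memL perm12) !inE => /or3P [] /eqP -> /or3P [] /eqP ->;
      lf perm12; move=> ?; lra.
move=> f [[Hpos Hsum] Heq].
have K r r' : r \in L12 -> r' \in L12 -> 0 < f r ->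
   route_cost exE (@exdl R) (@exdc R) (c0 |: [set c1; c2]) vO vD f r <=
   route_cost exE (@exdl R) (@exdc R) (c0 |: [set c1; c2]) vO vD f r'.
  by move=> Hr Hr'; apply: Heq; rewrite (memL perm12).
have Hnn r : r \in L12 -> 0 <= f r by move=> Hr; apply: Hpos; rewrite (memL perm12).
have n0 : 0 <= f (P1, c0) by apply: Hnn; vsimp.
have n1 : 0 <= f (P3, c2) by apply: Hnn; vsimp.
have n2 : 0 <= f (P4, c1) by apply: Hnn; vsimp.
have h01 := K (P1, c0) (P3, c2) ltac:(by vsimp) ltac:(by vsimp).
have h02 := K (P1, c0) (P4, c1) ltac:(by vsimp) ltac:(by vsimp).
have h10 := K (P3, c2) (P1, c0) ltac:(by vsimp) ltac:(by vsimp).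
have h12 := K (P3, c2) (P4, c1) ltac:(by vsimp) ltac:(by vsimp).
have h20 := K (P4, c1) (P1, c0) ltac:(by vsimp) ltac:(by vsimp).
have h21 := K (P4, c1) (P3, c2) ltac:(by vsimp) ltac:(by vsimp).
move: Hsum h01 h02 h10 h12 h20 h21; rewrite (sumL perm12) !big_cons big_nil; lf perm12.
rewrite tdE /=; lf perm12.
move: n0 n1 n2.
set x0 := f (P1, c0).
set x1 := f (P3, c2).
set x2 := f (P4, c1).
move=> n0 n1 n2 Hs h01 h02 h10 h12 h20 h21.
have E0 : x0 = 0 by case: (ltrP 0 x0) => ?; case: (ltrP 0 x1) => ?; case: (ltrP 0 x2) => ?; spec; lra.
have E1 : x1 = 1 by case: (ltrP 0 x0) => ?; case: (ltrP 0 x1) => ?; case: (ltrP 0 x2) => ?; spec; lra.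
have E2 : x2 = 0 by case: (ltrP 0 x0) => ?; case: (ltrP 0 x1) => ?; case: (ltrP 0 x2) => ?; spec; lra.
by rewrite E0 E1 E2; field.
Qed.

Notation L23 := [:: (P1, c0); (P2, c3); (P3, c2)].
Lemma feas23 r : feasibleF2 exE (c0 |: [set c2; c3]) vO vD r = (r \in L23).
Proof. feas_tac. Qed.
Lemma perm23 : perm_eq (routes exE (c0 |: [set c2; c3]) vO vD) L23.
Proof. apply: routes_perm; [by vsimp | exact: feas23]. Qed.
Lemma case23 (R : realFieldType) : eq_total_delay [set c2; c3] (2%:R : R).
Proof.
split.
  exists (fun r => if r == (P1, c0) then 0 else if r == (P2, c3) then 0 else if r == (P3, c2) then 1 else 0 : R).
  split; first split.
  - move=> r; rewrite (memL perm23) !inE => /or3P [] /eqP ->; vsimp; lra.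
  - rewrite (sumL perm23) !big_cons big_nil; vsimp; lra.
  - move=> r r'; rewrite !(memL perm23) !inE => /or3P [] /eqP -> /or3P [] /eqP ->;
      lf perm23; move=> ?; lra.
move=> f [[Hpos Hsum] Heq].
have K r r' : r \in L23 -> r' \in L23 -> 0 < f r ->
   route_cost exE (@exdl R) (@exdc R) (c0 |: [set c2; c3]) vO vD f r <=
   route_cost exE (@exdl R) (@exdc R) (c0 |: [set c2; c3]) vO vD f r'.
  by move=> Hr Hr'; apply: Heq; rewrite (memL perm23).
have Hnn r : r \in L23 -> 0 <= f r by move=> Hr; apply: Hpos; rewrite (memL perm23).
have n0 : 0 <= f (P1, c0) by apply: Hnn; vsimp.
have n1 : 0 <= f (P2, c3) by apply: Hnn; vsimp.
have n2 : 0 <= f (P3, c2) by apply: Hnn; vsimp.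
have h01 := K (P1, c0) (P2, c3) ltac:(by vsimp) ltac:(by vsimp).
have h02 := K (P1, c0) (P3, c2) ltac:(by vsimp) ltac:(by vsimp).
have h10 := K (P2, c3) (P1, c0) ltac:(by vsimp) ltac:(by vsimp).
have h12 := K (P2, c3) (P3, c2) ltac:(by vsimp) ltac:(by vsimp).
have h20 := K (P3, c2) (P1, c0) ltac:(by vsimp) ltac:(by vsimp).
have h21 := K (P3, c2) (P2, c3) ltac:(by vsimp) ltac:(by vsimp).
move: Hsum h01 h02 h10 h12 h20 h21; rewrite (sumL perm23) !big_cons big_nil; lf perm23.
rewrite tdE /=; lf perm23.
move: n0 n1 n2.
set x0 := f (P1, c0).
set x1 := f (P2, c3).
set x2 := f (P3, c2).
move=> n0 n1 n2 Hs h01 h02 h10 h12 h20 h21.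
have E0 : x0 = 0 by case: (ltrP 0 x0) => ?; case: (ltrP 0 x1) => ?; case: (ltrP 0 x2) => ?; spec; lra.
have E1 : x1 = 0 by case: (ltrP 0 x0) => ?; case: (ltrP 0 x1) => ?; case: (ltrP 0 x2) => ?; spec; lra.
have E2 : x2 = 1 by case: (ltrP 0 x0) => ?; case: (ltrP 0 x1) => ?; case: (ltrP 0 x2) => ?; spec; lra.
by rewrite E0 E1 E2; field.
Qed.

Notation L13 := [:: (P1, c0); (P2, c3); (P4, c1)].
Lemma feas13 r : feasibleF2 exE (c0 |: [set c1; c3]) vO vD r = (r \in L13).
Proof. feas_tac. Qed.
Lemma perm13 : perm_eq (routes exE (c0 |: [set c1; c3]) vO vD) L13.
Proof. apply: routes_perm; [by vsimp | exact: feas13]. Qed.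
Lemma case13 (R : realFieldType) : eq_total_delay [set c1; c3] (16%:R / 10%:R : R).
Proof.
split.
  exists (fun r => if r == (P1, c0) then 0 else if r == (P2, c3) then 1/2 else if r == (P4, c1) then 1/2 else 0 : R).
  split; first split.
  - move=> r; rewrite (memL perm13) !inE => /or3P [] /eqP ->; vsimp; lra.
  - rewrite (sumL perm13) !big_cons big_nil; vsimp; lra.
  - move=> r r'; rewrite !(memL perm13) !inE => /or3P [] /eqP -> /or3P [] /eqP ->;
      lf perm13; move=> ?; lra.
move=> f [[Hpos Hsum] Heq].
have K r r' : r \in L13 -> r' \in L13 -> 0 < f r ->
   route_cost exE (@exdl R) (@exdc R) (c0 |: [set c1; c3]) vO vD f r <=
   route_cost exE (@exdl R) (@exdc R) (c0 |: [set c1; c3]) vO vD f r'.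
  by move=> Hr Hr'; apply: Heq; rewrite (memL perm13).
have Hnn r : r \in L13 -> 0 <= f r by move=> Hr; apply: Hpos; rewrite (memL perm13).
have n0 : 0 <= f (P1, c0) by apply: Hnn; vsimp.
have n1 : 0 <= f (P2, c3) by apply: Hnn; vsimp.
have n2 : 0 <= f (P4, c1) by apply: Hnn; vsimp.
have h01 := K (P1, c0) (P2, c3) ltac:(by vsimp) ltac:(by vsimp).
have h02 := K (P1, c0) (P4, c1) ltac:(by vsimp) ltac:(by vsimp).
have h10 := K (P2, c3) (P1, c0) ltac:(by vsimp) ltac:(by vsimp).
have h12 := K (P2, c3) (P4, c1) ltac:(by vsimp) ltac:(by vsimp).
have h20 := K (P4, c1) (P1, c0) ltac:(by vsimp) ltac:(by vsimp).
have h21 := K (P4, c1) (P2, c3) ltac:(by vsimp) ltac:(by vsimp).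
move: Hsum h01 h02 h10 h12 h20 h21; rewrite (sumL perm13) !big_cons big_nil; lf perm13.
rewrite tdE /=; lf perm13.
move: n0 n1 n2.
set x0 := f (P1, c0).
set x1 := f (P2, c3).
set x2 := f (P4, c1).
move=> n0 n1 n2 Hs h01 h02 h10 h12 h20 h21.
have E0 : x0 = 0 by case: (ltrP 0 x0) => ?; case: (ltrP 0 x1) => ?; case: (ltrP 0 x2) => ?; spec; lra.
have E1 : x1 = 1/2 by case: (ltrP 0 x0) => ?; case: (ltrP 0 x1) => ?; case: (ltrP 0 x2) => ?; spec; lra.
have E2 : x2 = 1/2 by case: (ltrP 0 x0) => ?; case: (ltrP 0 x1) => ?; case: (ltrP 0 x2) => ?; spec; lra.
by rewrite E0 E1 E2; field.
Qed.

Theorem mainTheorem3 (R : realFieldType) :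
  (* (i) a single added charger *)
  eq_total_delay [set c1] (21%:R / 10%:R : R) /\
  eq_total_delay [set c2] (2%:R : R) /\
  eq_total_delay [set c3] (21%:R / 10%:R : R) /\
  (* (ii) *)
  eq_total_delay [set c1; c2] (2%:R : R) /\
  eq_total_delay [set c2; c3] (2%:R : R) /\
  (* (iii) *)
  eq_total_delay [set c1; c3] (16%:R / 10%:R : R).
Proof.
split; first exact: case1.
split; first exact: case2.
split; first exact: case3.
split; first exact: case12.
split; first exact: case23.
exact: case13.
Qed.
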